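(* There exist a set $\mathcal{X}$, a family of groups $\mathcal{G} \subseteq \{0,1\}^{\mathcal{X}}$ and a hypothesis class $\mathcal{H} \subseteq \{-1,+1\}^{\mathcal{X}}$, with both $\mathcal{G}$ and $\mathcal{H}$ of finite VC dimension, such that the class $\mathcal{C}(\mathcal{G},\mathcal{H})$ of group-realizable concepts has infinite VC dimension.
   Context: A group $g \in \mathcal{G}$ is identified both with a function $g\colon \mathcal{X}\to\{0,1\}$ and with the subset $\{x : g(x)=1\}\subseteq \mathcal{X}$. Given $\mathcal{G}\subseteq\{0,1\}^{\mathcal{X}}$ and $\mathcal{H}\subseteq\{-1,+1\}^{\mathcal{X}}$ on the same domain $\mathcal{X}$, the set of group-realizable concepts $\mathcal{C}(\mathcal{G},\mathcal{H})\subseteq\{-1,+1\}^{\mathcal{X}}$ is the set of all functions $c\colon\mathcal{X}\to\{-1,+1\}$ such that for each $g\in\mathcal{G}$ there exists $h\in\mathcal{H}$ with $c(x)=h(x)$ for all $x\in g$. *)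

(* Defs.v *)
From Stdlib Require Import List.
Import ListNotations.

Inductive pm1 : Type := Mone | Pone.

Definition fclass (X Y : Type) := (X -> Y) -> Prop.

Definition shatters {X Y : Type} (F : fclass X Y) (S : list X) : Prop :=
  forall l : X -> Y, exists f, F f /\ forall x, In x S -> f x = l x.

Definition finite_VC {X Y : Type} (F : fclass X Y) : Prop :=
  exists d : nat, forall S : list X, NoDup S -> shatters F S -> length S <= d.

Definition infinite_VC {X Y : Type} (F : fclass X Y) : Prop :=
  forall n : nat, exists S : list X, NoDup S /\ length S = n /\ shatters F S.

(* Group-realizable concepts C(G,H). A group g : X -> bool is identified
   with the set {x | g x = true}. *)
Definition group_realizable {X : Type} (G : fclass X bool) (H : fclass X pm1)
  : fclass X pm1 :=
  fun c => forall g, G g -> exists h, H h /\ forall x, g x = true -> c x = h x.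

(* Main.v *)
Require Import Defs.
From Stdlib Require Import List Arith Lia.
Import ListNotations.

Theorem mainTheorem1 :
  exists (X : Type) (G : fclass X bool) (H : fclass X pm1),
    finite_VC G /\ finite_VC H /\ infinite_VC (group_realizable G H).
Proof.
  exists nat, (fun g => exists x, g = fun y => Nat.eqb y x),
    (fun h => h = (fun _ => Mone) \/ h = (fun _ => Pone)).
  split; [|split].
  - exists 1. intros S HN Hs.
    destruct S as [|a [|b S']]; simpl; try lia.
    exfalso. destruct (Hs (fun _ => true)) as [f [[x ->] Hf]].
    pose proof (Hf a ltac:(simpl; auto)) as Ha.
    pose proof (Hf b ltac:(simpl; auto)) as Hb.
    apply Nat.eqb_eq in Ha. apply Nat.eqb_eq in Hb. subst.
    inversion HN; subst. apply H1; simpl; auto.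
  - exists 1. intros S HN Hs.
    destruct S as [|a [|b S']]; simpl; try lia.
    exfalso.
    destruct (Hs (fun y => if Nat.eqb y a then Mone else Pone)) as [f [Hh Hf]].
    pose proof (Hf a ltac:(simpl; auto)) as Ha.
    pose proof (Hf b ltac:(simpl; auto)) as Hb.
    rewrite Nat.eqb_refl in Ha.
    assert (Nat.eqb b a = false) as E.
    { apply Nat.eqb_neq. intro; subst. inversion HN; subst. apply H1; simpl; auto. }
    rewrite E in Hb.
    destruct Hh as [-> | ->]; discriminate.
  - intros n. exists (seq 0 n). split; [apply seq_NoDup|split; [apply length_seq|]].
    intros l. exists l. split; [|auto].
    intros g [x ->]. destruct (l x) eqn:E.
    + exists (fun _ => Mone). split; [auto|]. intros y Hy. apply Nat.eqb_eq in Hy. subst; auto.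
    + exists (fun _ => Pone). split; [auto|]. intros y Hy. apply Nat.eqb_eq in Hy. subst; auto.
Qed.
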